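(* Let $N\geq 1$ and let $X=(X_1,\dots,X_N)$ be a random vector in $\{-1,1\}^N$ with unit covariance $\rho=\rho^X$, $\rho_{i,j}=\mathbf{E}[X_iX_j]$. (i) The matrix $\rho$ is singular if and only if there exist real deterministic coefficients $\lambda_1,\dots,\lambda_N$, not all zero, such that $\sum_k\lambda_kX_k=0$ almost surely. (ii) If $\rho$ is singular, then $\pi(\rho)$ lies on the boundary of $\mathcal{U}_N^*$ in $\mathscr{F}_N^*$.
   Context: $\mathcal{U}_N$ is the set of all matrices $\rho^X$ for random vectors $X\in\{-1,1\}^N$ (unit covariances). $\mathscr{F}_N^*$ is the space of real arrays indexed by pairs $1\le i<j\le N$, $\pi(\rho)=(\rho_{i,j})_{i<j}$, and $\mathcal{U}_N^*=\pi(\mathcal{U}_N)$. *)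

(* Defs.v *)
From HB Require Import structures.
From mathcomp Require Import all_boot all_order all_algebra.
From mathcomp Require Import all_classical all_reals all_analysis.
Set Implicit Arguments. Unset Strict Implicit. Unset Printing Implicit Defensive.
Import Order.TTheory GRing.Theory Num.Theory numFieldNormedType.Exports.
Local Open Scope ring_scope.

(* The sign cube {-1,1}^N : a point is encoded by x : {ffun 'I_N -> bool},
   coordinate i being +1 if x i = true and -1 otherwise. *)
Definition cube (N : nat) := {ffun 'I_N -> bool}.
Definition sgn {R : pzRingType} (b : bool) : R := if b then 1 else -1.

(* The law of a random vector X in {-1,1}^N: a probability mass function
   on the (finite) cube.  X is determined (in law) by p, and
   E[f(X)] = \sum_x p x * f x. *)
Definition is_law {R : realType} (N : nat) (p : {ffun cube N -> R}) : Prop :=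
  (forall x, 0 <= p x) /\ \sum_x p x = 1.

Definition rho_of {R : realType} (N : nat) (p : {ffun cube N -> R}) : 'M[R]_N :=
  \matrix_(i, j) \sum_x p x * (sgn (x i) * sgn (x j)).

(* "sum_k lambda_k X_k = 0 almost surely": the relation holds at every
   point of the cube charged by the law. *)
Definition as_lin_rel {R : realType} (N : nat) (p : {ffun cube N -> R})
  (lam : 'I_N -> R) : Prop :=
  forall x : cube N, 0 < p x -> \sum_k lam k * sgn (x k) = 0.

Definition U_set {R : realType} (N : nat) : set 'M[R]_N :=
  [set r | exists p : {ffun cube N -> R}, is_law p /\ r = rho_of p].

Definition pairs (N : nat) := {ij : 'I_N * 'I_N | (ij.1 < ij.2)%N}.

(* F_N^* : real arrays indexed by pairs i<j, with the product (= Euclidean)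
   topology. *)
Definition RT (R : realType) : topologicalType := R.
Notation Fstar R N := (@prod_topology (pairs N) (fun _ => Topological.sort (RT R))).

Definition piF {R : realType} (N : nat) (r : 'M[R]_N) : Fstar R N :=
  fun ij => r (val ij).1 (val ij).2.

Definition Ustar {R : realType} (N : nat) : set (Fstar R N) :=
  [set piF r | r in @U_set R N].

Definition boundary {T : topologicalType} (A : set T) : set T :=
  closure A `\` interior A.

(* Main.v *)
Require Import Defs.
From HB Require Import structures.
From mathcomp Require Import all_boot all_order all_algebra.
From mathcomp Require Import all_classical all_reals all_analysis.
From mathcomp Require Import ring lra.
Import Order.TTheory GRing.Theory Num.Theory numFieldNormedType.Exports.
Local Open Scope ring_scope.
Local Open Scope classical_set_scope.

Section Aux.
Variables (R : realType) (N : nat).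

Definition Qf (lam : 'I_N -> R) (r : 'M[R]_N) :=
  \sum_a \sum_b lam a * lam b * r a b.

Definition Sx (lam : 'I_N -> R) (x : cube N) := \sum_k lam k * sgn (x k).

Lemma sgn2 (b : bool) : sgn b * sgn b = 1 :> R.
Proof. by case: b; rewrite /sgn ?mulr1 ?mulrNN ?mulr1. Qed.

Lemma rho_sym (p : {ffun cube N -> R}) a b : rho_of p a b = rho_of p b a.
Proof. by rewrite !mxE; apply: eq_bigr => x _; rewrite (mulrC (sgn _)). Qed.

Lemma rho_diag (p : {ffun cube N -> R}) : is_law p -> forall a, rho_of p a a = 1.
Proof.
move=> [_ h1] a; rewrite mxE -h1; apply: eq_bigr => x _; by rewrite sgn2 mulr1.
Qed.

Lemma Qf_rho lam (p : {ffun cube N -> R}) :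
  Qf lam (rho_of p) = \sum_x p x * (Sx lam x) ^+ 2.
Proof.
rewrite /Qf.
have -> : \sum_x p x * Sx lam x ^+ 2 =
  \sum_x \sum_a \sum_b lam a * lam b * (p x * (sgn (x a) * sgn (x b))).
  apply: eq_bigr => x _; rewrite expr2 /Sx mulr_suml mulr_sumr.
  apply: eq_bigr => a _; rewrite mulr_sumr mulr_sumr; apply: eq_bigr => b _.
  by rewrite !mulrA; ring.
rewrite [RHS]exchange_big; apply: eq_bigr => a _ /=.
rewrite [RHS]exchange_big; apply: eq_bigr => b _ /=.
by rewrite mxE mulr_sumr.
Qed.


Lemma Qf_ge0 lam (p : {ffun cube N -> R}) : is_law p -> 0 <= Qf lam (rho_of p).
Proof.
move=> [hp _]; rewrite Qf_rho; apply: sumr_ge0 => x _.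
by apply: mulr_ge0 => //; apply: sqr_ge0.
Qed.

Lemma linrel_Q lam (p : {ffun cube N -> R}) : is_law p ->
  (as_lin_rel p lam <-> Qf lam (rho_of p) = 0).
Proof.
move=> [hp h1]; rewrite Qf_rho; split.
  move=> h; apply: big1 => x _.
  have := hp x; rewrite le_eqVlt => /orP [/eqP hx|/h hx].
    by rewrite -hx mul0r.
  have hS : Sx lam x = 0 by exact: hx.
  by rewrite hS expr2 !mulr0.
move=> h0 x px.
have := @psumr_eq0P _ _ xpredT (fun x => p x * Sx lam x ^+ 2) _ h0 x isT.
  move=> /(_ (fun y _ => mulr_ge0 (hp y) (sqr_ge0 _)))/eqP.
by rewrite mulf_eq0 (gt_eqF px) /= sqrf_eq0 => /eqP.
Qed.

Lemma Qf_mul lam (r : 'M[R]_N) :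
  Qf lam r = \sum_b lam b * ((\row_k lam k) *m r) 0 b.
Proof.
rewrite /Qf exchange_big; apply: eq_bigr => b _.
rewrite mxE mulr_sumr; apply: eq_bigr => a _; rewrite mxE; ring.
Qed.

Lemma rho_mul lam (p : {ffun cube N -> R}) a :
  ((\row_k lam k) *m rho_of p) 0 a = \sum_x p x * sgn (x a) * Sx lam x.
Proof.
rewrite mxE.
have -> : \sum_b (\row_k lam k) 0 b * rho_of p b a =
  \sum_b \sum_x p x * sgn (x a) * (lam b * sgn (x b)).
  apply: eq_bigr => b _; rewrite !mxE mulr_sumr; apply: eq_bigr => x _; ring.
rewrite exchange_big; apply: eq_bigr => x _ /=.
by rewrite /Sx mulr_sumr.
Qed.


Lemma sum_delta (f : 'I_N -> R) i : \sum_a f a * (a == i)%:R = f i.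
Proof.
rewrite (bigD1 i) //= eqxx mulr1 big1 ?addr0 // => a /negPf ->.
by rewrite mulr0.
Qed.

Lemma pert_entry (r r0 : 'M[R]_N) (i j : 'I_N) (hij : (i < j)%N) (t : R) :
  piF r = dfwith (piF r0) (exist _ (i, j) hij : pairs N) t ->
  forall a b : 'I_N, (a < b)%N -> r a b = if (a == i) && (b == j) then t else r0 a b.
Proof.
move=> hq a b hab.
have -> : r a b = dfwith (piF r0) (exist _ (i, j) hij : pairs N) t
   (exist _ (a, b) hab) by rewrite -hq.
case: (eqVneq (exist _ (i, j) hij : pairs N) (exist _ (a, b) hab)) => [e|ne].
  have [ea eb] : i = a /\ j = b by move: (congr1 val e) => /= [-> ->].
  rewrite -e /dfwith; case: eqP => // ii; rewrite eq_axiomK /= -ea -eb !eqxx //.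
rewrite /dfwith; case: eqP => [e|_]; first by case/eqP: ne.
case: ifP => // /andP [/eqP ea /eqP eb]; subst a b.
by case/eqP: ne; apply: val_inj.
Qed.

Lemma pert_all (p p' : {ffun cube N -> R}) (i j : 'I_N) (hij : (i < j)%N) d :
  is_law p -> is_law p' ->
  piF (rho_of p') = dfwith (piF (rho_of p)) (exist _ (i, j) hij : pairs N)
     (rho_of p i j - d) ->
  forall a b, rho_of p' a b = rho_of p a b -
     d * ((a == i)%:R * (b == j)%:R + (a == j)%:R * (b == i)%:R).
Proof.
move=> lp lp' hq.
have H := @pert_entry _ _ _ _ _ _ hq.
have ij : i != j by rewrite neq_ltn hij.
have ji : (j < i)%N = false by apply/negbTE; rewrite -leqNgt ltnW.
move=> a b; case: (ltngtP a b) => hab.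
- have z : (a == j)%:R * (b == i)%:R = 0 :> R.
    case: (eqVneq a j) => [ea|]; last by rewrite mul0r.
    case: (eqVneq b i) => [eb|]; last by rewrite mulr0.
    by move: hab; rewrite ea eb ji.
  rewrite H // z addr0.
  case: (eqVneq a i) => [->|na]; case: (eqVneq b j) => [->|nb] /=;
    by rewrite ?mulr1 ?mul1r ?mulr0 ?mul0r ?subr0.
- have z : (a == i)%:R * (b == j)%:R = 0 :> R.
    case: (eqVneq a i) => [ea|]; last by rewrite mul0r.
    case: (eqVneq b j) => [eb|]; last by rewrite mulr0.
    by move: hab; rewrite ea eb ji.
  rewrite rho_sym (rho_sym p a b) H // z add0r.
  case: (eqVneq b i) => [->|na]; case: (eqVneq a j) => [->|nb] /=;
    by rewrite ?mulr1 ?mul1r ?mulr0 ?mul0r ?subr0.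
- move/val_inj: hab => hab; rewrite -hab !rho_diag //.
  have z1 : (a == i)%:R * (a == j)%:R = 0 :> R.
    case: (eqVneq a i) => [ea|]; last by rewrite mul0r.
    by rewrite ea (negbTE ij) mulr0.
  have z2 : (a == j)%:R * (a == i)%:R = 0 :> R by rewrite mulrC.
  by rewrite z1 z2 addr0 mulr0 subr0.
Qed.

Lemma sum2_delta (f : 'I_N -> 'I_N -> R) i j :
  \sum_a \sum_b f a b * ((a == i)%:R * (b == j)%:R) = f i j.
Proof.
rewrite -(sum_delta (fun a => f a j) i); apply: eq_bigr => a _.
rewrite -(sum_delta (fun b => f a b * (a == i)%:R) j).
by apply: eq_bigr => b _; ring.
Qed.

Lemma Qf_pert lam (r r0 : 'M[R]_N) (i j : 'I_N) d :
  (forall a b, r a b = r0 a b -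
     d * ((a == i)%:R * (b == j)%:R + (a == j)%:R * (b == i)%:R)) ->
  Qf lam r = Qf lam r0 - 2 * d * (lam i * lam j).
Proof.
move=> H; rewrite /Qf.
transitivity (\sum_a \sum_b (lam a * lam b * r0 a b
   - d * (lam a * lam b * ((a == i)%:R * (b == j)%:R))
   - d * (lam a * lam b * ((a == j)%:R * (b == i)%:R)))).
  by apply: eq_bigr => a _; apply: eq_bigr => b _; rewrite H; ring.
under eq_bigr => a _ do rewrite !sumrB -!mulr_sumr.
rewrite !sumrB -!mulr_sumr.
rewrite (sum2_delta (fun a b => lam a * lam b)).
rewrite (sum2_delta (fun a b => lam a * lam b)).
ring.
Qed.


End Aux.

Theorem theorem3 (R : realType) (N : nat) (hN : (1 <= N)%N)
  (p : {ffun cube N -> R}) (hp : is_law p) :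
  (\det (rho_of p) = 0 <->
     exists lam : 'I_N -> R, (exists k, lam k != 0) /\ as_lin_rel p lam)
  /\ (\det (rho_of p) = 0 -> boundary (@Ustar R N) (piF (rho_of p))).
Proof.
have part1 : \det (rho_of p) = 0 <->
     exists lam : 'I_N -> R, (exists k, lam k != 0) /\ as_lin_rel p lam.
  split.
  - move/eqP/det0P => [v nv hv].
    exists (fun k => v 0 k); split.
      case: (pselect (exists k, v 0 k != 0)) => // nk; exfalso.
      move/eqP: nv; apply; apply/rowP => k; rewrite mxE.
      case: (eqVneq (v 0 k) 0) => // h; exfalso; apply: nk; by exists k.
    apply/(linrel_Q _ _ _ _ hp); rewrite Qf_mul.
    have -> : \row_k v 0 k = v by apply/rowP => k; rewrite mxE.
    by rewrite hv; apply: big1 => a _; rewrite mxE mulr0.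
  - move=> [lam [[k nk] hl]]; apply/eqP/det0P; exists (\row_k lam k).
      apply/eqP => h0; move: nk.
      by have := congr1 (fun m : 'M[R]_(1, N) => m 0 k) h0; rewrite !mxE => ->; rewrite eqxx.
    apply/rowP => a; rewrite rho_mul mxE; apply: big1 => x _.
    have := proj1 hp x; rewrite le_eqVlt => /orP [/eqP hx|hx].
      by rewrite -hx !mul0r.
    have hS : @Sx R N lam x = 0 by exact: hl x hx.
    by rewrite hS mulr0.
split => // hdet.
have [lam [[k nk] hl]] := part1.1 hdet.
have [x0 px0] : exists x, 0 < p x.
  case: (pselect (exists x, 0 < p x)) => // nx; exfalso.
  have : \sum_x p x = 0.
    apply: big1 => x _; apply/eqP; rewrite eq_le (proj1 hp x) andbT leNgt.
    by apply/negP => h; apply: nx; exists x.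
  by rewrite (proj2 hp) => /eqP; rewrite oner_eq0.
have [k2 [nk2 hk2]] : exists k2, k2 != k /\ lam k2 != 0.
  case: (pselect (exists k2, k2 != k /\ lam k2 != 0)) => // nk2; exfalso.
  have := hl x0 px0; rewrite (bigD1 k) //= big1 ?addr0.
    move=> /eqP; rewrite mulf_eq0 (negbTE nk) /=.
    by case: (x0 k); rewrite /sgn ?oppr_eq0 oner_eq0.
  move=> b bk; case: (eqVneq (lam b) 0) => [->|nb]; first by rewrite mul0r.
  by exfalso; apply: nk2; exists b.
have [i [j [hij [li lj]]]] : exists i j : 'I_N, (i < j)%N /\ lam i != 0 /\ lam j != 0.
  case: (ltngtP k k2) => h.
  - by exists k, k2.
  - by exists k2, k.
  - by move: nk2; rewrite (val_inj h) eqxx.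
pose c := lam i * lam j.
have c0 : c != 0 by rewrite mulf_neq0.
split.
  apply: subset_closure; exists (rho_of p) => //; by exists p.
move=> hint.
pose ij0 := exist _ (i, j) hij : pairs N.
pose y := piF (rho_of p) ij0.
have e0 : dfwith (piF (rho_of p)) ij0 y = piF (rho_of p).
  by apply: functional_extensionality_dep => ?; case: dfwithP.
have hn : nbhs y ((dfwith (piF (rho_of p)) ij0) @^-1` (@Ustar R N)).
  apply: (@dfwith_continuous _ (fun _ => RT R) (piF (rho_of p)) ij0 y).
  by rewrite e0.
move: hn => /nbhs_ballP [e /= epos hb].
pose d := e / 2 * Num.sg c.
have : Ustar (dfwith (piF (rho_of p)) ij0 (y - d)).
  apply: hb.
  rewrite /ball /= opprB addrC subrK /d normrM normr_sg c0 mulr1 ger0_norm; last by rewrite divr_ge0 // ltW.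
  by rewrite ltr_pdivrMr // ltr_pMr // ltr1n.
move=> [r [p' [lp' er]] hq]; subst r.
have H := @pert_all R N p p' i j hij d hp lp' hq.
have := Qf_pert _ _ lam _ _ _ _ _ H.
rewrite (proj1 (linrel_Q _ _ lam _ hp) hl) => hQ.
have := Qf_ge0 _ _ lam _ lp'; rewrite hQ.
have dc : 2 * d * (lam i * lam j) = e * `|c|.
  by rewrite /d /c normrEsg; field.
rewrite dc.
have : 0 < e * `|c| by rewrite mulr_gt0 // normr_gt0.
lra.
Qed.
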